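(* Let $\mu>0$ and $f\in C^2([0,1])$. Then for every $x\in[0,1]$, $$\lim_{n\to+\infty} n\left[\mathscr{L}_n^K(f,x)-f(x)\right]=\ln_\mu(x)\left[f_\mu'(x)\left(\frac12+\frac{x-x^2}{2(1+\mu)}-x\right)+f_\mu''(x)\,\frac{x-x^2}{2}\right].$$
   Context: Fix $\mu>0$. Let $\ln_\mu(x):=\ln(1+\mu+x)$ for $x\in[0,1]$, and for $f:[0,1]\to\mathbb{R}$ let $f_\mu(x):=f(x)/\ln_\mu(x)$. Let $p_{n,k}(y):=\binom{n}{k}y^k(1-y)^{n-k}$ and $a_{n+1}(x):=\dfrac{\ln\left(1+\frac{x}{(n+1)(1+\mu)}\right)}{\ln\left(1+\frac{1}{(n+1)(1+\mu)}\right)}$, $x\in[0,1]$. For $n\in\mathbb{N}$ define $\mathscr{L}_n^K(f,x)=\mathscr{L}_n^K f(x):=\ln_\mu(x)\sum_{k=0}^n p_{n,k}(a_{n+1}(x))\,(n+1)\int_{k/(n+1)}^{(k+1)/(n+1)} f_\mu(t)\,dt$, $x\in[0,1]$. *)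

(* Defs.v *)
From Stdlib Require Import Reals.
From Coquelicot Require Import Coquelicot.
Open Scope R_scope.

Definition in01 (x : R) : Prop := 0 <= x <= 1.

Definition ln_mu (mu x : R) : R := ln (1 + mu + x).

Definition f_mu (mu : R) (f : R -> R) (x : R) : R := f x / ln_mu mu x.

Definition p_nk (n k : nat) (y : R) : R := Binomial.C n k * y ^ k * (1 - y) ^ (n - k).

Definition a_n1 (mu : R) (n : nat) (x : R) : R :=
  ln (1 + x / (INR (n + 1) * (1 + mu))) / ln (1 + 1 / (INR (n + 1) * (1 + mu))).

Definition LK (mu : R) (n : nat) (f : R -> R) (x : R) : R :=
  ln_mu mu x *
  sum_f_R0 (fun k => p_nk n k (a_n1 mu n x) * INR (n + 1) *
                     RInt (f_mu mu f) (INR k / INR (n + 1)) (INR (k + 1) / INR (n + 1))) n.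

Definition deriv01 (g g' : R -> R) : Prop :=
  forall x, in01 x ->
    filterlim (fun y => (g y - g x) / (y - x))
              (within (fun y => in01 y /\ y <> x) (locally x))
              (locally (g' x)).

Definition cont01 (g : R -> R) : Prop :=
  forall x, in01 x -> filterlim g (within in01 (locally x)) (locally (g x)).

(* f in C^2([0,1]) (only the values of f on [0,1] matter) *)
Definition C2_01 (f : R -> R) : Prop :=
  exists f1 f2 : R -> R, deriv01 f f1 /\ deriv01 f1 f2 /\ cont01 f2.

(* Main.v *)
Require Import Defs.
From Stdlib Require Import Reals.
From Coquelicot Require Import Coquelicot.
Open Scope R_scope.
From Stdlib Require Import Lra Lia Psatz.


Definition E (n : nat) (y : R) (phi : nat -> R) : R :=
  sum_f_R0 (fun k => p_nk n k y * phi k) n.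

Lemma E_ext n y phi psi : (forall k, (k <= n)%nat -> phi k = psi k) -> E n y phi = E n y psi.
Proof. intros H; unfold E; apply sum_eq; intros i Hi; rewrite H; auto. Qed.

Lemma sum_lin (F phi psi : nat -> R) (a : R) N :
  sum_f_R0 (fun k => F k * (a * phi k + psi k)) N =
  a * sum_f_R0 (fun k => F k * phi k) N + sum_f_R0 (fun k => F k * psi k) N.
Proof. induction N; simpl; [ring|rewrite IHN; ring]. Qed.

Lemma E_lin n y a phi psi : E n y (fun k => a * phi k + psi k) = a * E n y phi + E n y psi.
Proof. apply sum_lin. Qed.

Lemma sum_shift (F : nat -> R) n : sum_f_R0 (fun i => F (S i)) n = sum_f_R0 F (S n) - F 0%nat.
Proof. rewrite (decomp_sum F (S n)) by lia. simpl. ring. Qed.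

Lemma p_pascal n i y : (i < n)%nat ->
  p_nk (S n) (S i) y = y * p_nk n i y + (1 - y) * p_nk n (S i) y.
Proof.
  intros H; unfold p_nk. rewrite <- pascal by auto.
  replace (S n - S i)%nat with (n - i)%nat by lia.
  replace (n - i)%nat with (S (n - S i)) by lia. simpl. ring.
Qed.

Lemma E_rec n y phi :
  E (S n) y phi = E n y (fun k => (1 - y) * phi k + y * phi (S k)).
Proof.
  destruct n as [|n].
  - unfold E, p_nk; simpl. rewrite !C_n_0. replace (Binomial.C 1 1) with 1 by (rewrite C_n_n; auto). ring.
  - unfold E. rewrite decomp_sum by lia. simpl Init.Nat.pred.
    rewrite tech5.
    rewrite (sum_eq (fun i => p_nk (S (S n)) (S i) y * phi (S i))
                    (fun i => (y * p_nk (S n) i y + (1 - y) * p_nk (S n) (S i) y) * phi (S i))).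
    2:{ intros i Hi. rewrite p_pascal by lia. auto. }
    rewrite (decomp_sum (fun k => p_nk (S n) k y * ((1 - y) * phi k + y * phi (S k))) (S n)) by lia.
    simpl Init.Nat.pred.
    rewrite (sum_eq (fun i => (y * p_nk (S n) i y + (1 - y) * p_nk (S n) (S i) y) * phi (S i))
                    (fun i => p_nk (S n) i y * (y * phi (S i)) + (1-y) * p_nk (S n) (S i) y * phi (S i))).
    2:{ intros; ring. }
    rewrite plus_sum.
    rewrite (sum_eq (fun i => p_nk (S n) (S i) y * ((1 - y) * phi (S i) + y * phi (S (S i))))
                    (fun i => (1-y) * p_nk (S n) (S i) y * phi (S i) + p_nk (S n) (S i) y * (y * phi (S (S i))))).
    2:{ intros; ring. }
    rewrite plus_sum.
    rewrite (sum_shift (fun i => p_nk (S n) i y * (y * phi (S i)))).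
    rewrite tech5.
    unfold p_nk. rewrite !C_n_0, !C_n_n.
    replace (S (S n) - S (S n))%nat with 0%nat by lia.
    replace (S n - S n)%nat with 0%nat by lia.
    replace (S (S n) - 0)%nat with (S (S n)) by lia.
    replace (S n - 0)%nat with (S n) by lia.
    simpl pow. ring.
Qed.



Lemma sum_poly (F : nat -> R) N a0 a1 a2 a3 a4 :
  sum_f_R0 (fun k => F k * (a0 + a1 * INR k + a2 * INR k ^ 2 + a3 * INR k ^ 3 + a4 * INR k ^ 4)) N =
  a0 * sum_f_R0 (fun k => F k * 1) N + a1 * sum_f_R0 (fun k => F k * INR k) N
  + a2 * sum_f_R0 (fun k => F k * INR k ^ 2) N
  + a3 * sum_f_R0 (fun k => F k * INR k ^ 3) N + a4 * sum_f_R0 (fun k => F k * INR k ^ 4) N.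
Proof. induction N; [simpl; ring|rewrite !tech5, IHN; ring]. Qed.

Lemma E_poly n y a0 a1 a2 a3 a4 :
  E n y (fun k => a0 + a1 * INR k + a2 * INR k ^ 2 + a3 * INR k ^ 3 + a4 * INR k ^ 4) =
  a0 * E n y (fun _ => 1) + a1 * E n y (fun k => INR k) + a2 * E n y (fun k => INR k ^ 2)
  + a3 * E n y (fun k => INR k ^ 3) + a4 * E n y (fun k => INR k ^ 4).
Proof. apply sum_poly. Qed.

Lemma E_0 y phi : E 0 y phi = phi 0%nat.
Proof. unfold E, p_nk; simpl. rewrite C_n_0. ring. Qed.

Lemma moments n y :
  let m := INR n in
  E n y (fun _ => 1) = 1 /\
  E n y (fun k => INR k) = m * y /\
  E n y (fun k => INR k ^ 2) = m * (m - 1) * y ^ 2 + m * y /\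
  E n y (fun k => INR k ^ 3) = m * (m - 1) * (m - 2) * y ^ 3 + 3 * m * (m - 1) * y ^ 2 + m * y /\
  E n y (fun k => INR k ^ 4) = m * (m - 1) * (m - 2) * (m - 3) * y ^ 4
       + 6 * m * (m - 1) * (m - 2) * y ^ 3 + 7 * m * (m - 1) * y ^ 2 + m * y.
Proof.
  induction n as [|n IH]; intros m.
  - subst m. rewrite !E_0. simpl. repeat split; ring.
  - destruct IH as (H0 & H1 & H2 & H3 & H4).
    assert (Hm : m = INR n + 1) by (subst m; apply S_INR).
    rewrite !E_rec.
    repeat split.
    + rewrite (E_ext _ _ _ (fun k => 1 + 0 * INR k + 0 * INR k ^ 2 + 0 * INR k ^ 3 + 0 * INR k ^ 4))
        by (intros; ring).
      rewrite E_poly, H0, H1, H2, H3, H4. ring.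
    + rewrite (E_ext _ _ _ (fun k => y + 1 * INR k + 0 * INR k ^ 2 + 0 * INR k ^ 3 + 0 * INR k ^ 4))
        by (intros; rewrite S_INR; ring).
      rewrite E_poly, H0, H1, H2, H3, H4. rewrite Hm. ring.
    + rewrite (E_ext _ _ _ (fun k => y + (2 * y) * INR k + 1 * INR k ^ 2 + 0 * INR k ^ 3 + 0 * INR k ^ 4))
        by (intros; rewrite S_INR; ring).
      rewrite E_poly, H0, H1, H2, H3, H4. rewrite Hm. ring.
    + rewrite (E_ext _ _ _ (fun k => y + (3 * y) * INR k + (3 * y) * INR k ^ 2 + 1 * INR k ^ 3 + 0 * INR k ^ 4))
        by (intros; rewrite S_INR; ring).
      rewrite E_poly, H0, H1, H2, H3, H4. rewrite Hm. ring.
    + rewrite (E_ext _ _ _ (fun k => y + (4 * y) * INR k + (6 * y) * INR k ^ 2 + (4 * y) * INR k ^ 3 + 1 * INR k ^ 4))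
        by (intros; rewrite S_INR; ring).
      rewrite E_poly, H0, H1, H2, H3, H4. rewrite Hm. ring.
Qed.

Lemma E_central2 n y : E n y (fun k => (INR k - INR n * y) ^ 2) = INR n * y * (1 - y).
Proof.
  destruct (moments n y) as (H0 & H1 & H2 & H3 & H4).
  rewrite (E_ext _ _ _ (fun k => (INR n * y)^2 + (- 2 * INR n * y) * INR k + 1 * INR k ^ 2 + 0 * INR k ^ 3 + 0 * INR k ^ 4))
    by (intros; ring).
  rewrite E_poly, H0, H1, H2, H3, H4. ring.
Qed.

Lemma E_central4 n y : E n y (fun k => (INR k - INR n * y) ^ 4) =
  INR n * y * (1 - y) * (1 + 3 * (INR n - 2) * y * (1 - y)).
Proof.
  destruct (moments n y) as (H0 & H1 & H2 & H3 & H4).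
  rewrite (E_ext _ _ _ (fun k => (INR n * y)^4 + (- 4 * (INR n * y)^3) * INR k + (6 * (INR n * y)^2) * INR k ^ 2 + (- 4 * INR n * y) * INR k ^ 3 + 1 * INR k ^ 4))
    by (intros; ring).
  rewrite E_poly, H0, H1, H2, H3, H4. ring.
Qed.

Lemma C_nonneg n k : 0 <= Binomial.C n k.
Proof.
  unfold Binomial.C. apply Rdiv_le_0_compat; [apply pos_INR|].
  apply Rmult_lt_0_compat; apply lt_0_INR, Factorial.lt_O_fact.
Qed.

Lemma p_nonneg n k y : 0 <= y <= 1 -> 0 <= p_nk n k y.
Proof.
  intros Hy. unfold p_nk. apply Rmult_le_pos; [apply Rmult_le_pos|]; try apply pow_le; try lra.
  apply C_nonneg.
Qed.

Lemma E_abs_le n y phi psi : 0 <= y <= 1 -> (forall k, (k <= n)%nat -> Rabs (phi k) <= psi k) ->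
  Rabs (E n y phi) <= E n y psi.
Proof.
  intros Hy H. unfold E. eapply Rle_trans; [apply sum_f_R0_triangle|].
  apply sum_Rle. intros k Hk. rewrite Rabs_mult, (Rabs_right (p_nk n k y)) by (apply Rle_ge, p_nonneg; auto).
  apply Rmult_le_compat_l; [apply p_nonneg; auto|]. apply H; auto.
Qed.

Lemma E_const n y c : E n y (fun _ => c) = c.
Proof.
  destruct (moments n y) as (H0 & _).
  rewrite (E_ext _ _ _ (fun k => c * 1 + (fun _ => 0) k)) by (intros; ring).
  rewrite E_lin, H0. unfold E. rewrite (sum_eq _ (fun _ => 0)) by (intros; ring).
  rewrite sum_cte. ring.
Qed.

Lemma rem_sum n y phi eps Cc D : 0 <= y <= 1 -> 0 <= eps -> 0 <= Cc ->
  let m := INR n in let u := / (m + 1) in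
  (forall k, (k <= n)%nat -> Rabs (phi k) <=
     3 * eps * u ^ 2 * (1 + (INR k - m * y) ^ 2 + D ^ 2)
    + 27 * Cc * u ^ 4 * (1 + (INR k - m * y) ^ 4 + D ^ 4)) ->
  Rabs (m * E n y phi) <= 3 * eps * (2 + D ^ 2) + 27 * Cc * u * (2 + D ^ 4).
Proof.
  intros Hy He HC m u H.
  assert (Hm : 0 <= m) by apply pos_INR.
  assert (Hu : 0 < u) by (apply Rinv_0_lt_compat; lra).
  assert (Hum : u * (m + 1) = 1) by (unfold u; field; lra).
  assert (Hmu : m * u <= 1) by nra.
  assert (Hu1 : u <= 1) by nra.
  pose proof (E_abs_le n y phi _ Hy H) as HE.
  assert (HEq : E n y (fun k => 3 * eps * u ^ 2 * (1 + (INR k - m * y) ^ 2 + D ^ 2)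
    + 27 * Cc * u ^ 4 * (1 + (INR k - m * y) ^ 4 + D ^ 4)) =
    E n y (fun k => (3 * eps * u ^ 2) * (INR k - m * y) ^ 2 +
     ((27 * Cc * u ^ 4) * (INR k - m * y) ^ 4 + (3 * eps * u ^ 2 * (1 + D ^ 2) + 27 * Cc * u ^ 4 * (1 + D ^ 4)))))
    by (apply E_ext; intros; ring).
  rewrite HEq in HE.
  rewrite E_lin, E_lin, E_const, E_central2, E_central4 in HE. fold m in HE.
  rewrite Rabs_mult, (Rabs_right m) by lra.
  set (s := y * (1 - y)) in *.
  assert (Hs : 0 <= s <= 1/4) by (unfold s; split; [apply Rmult_le_pos; lra | pose proof (pow2_ge_0 (y - 1/2)); nra]).
  assert (Hc4 : m * y * (1 - y) * (1 + 3 * (m - 2) * y * (1 - y)) <= (m + 1) ^ 2).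
  { replace (m * y * (1 - y) * (1 + 3 * (m - 2) * y * (1 - y))) with (m * s + 3 * m ^ 2 * s ^ 2 - 6 * m * s ^ 2)
      by (unfold s; ring).
    assert (m * s <= m / 4) by nra. assert (s ^ 2 <= 1/16) by nra. assert (m ^ 2 * s ^ 2 <= m ^ 2 * (1/16)) by (apply Rmult_le_compat_l; [apply pow2_ge_0|auto]).
    assert (0 <= m * s ^ 2) by (apply Rmult_le_pos; [lra|apply pow2_ge_0]). nra. }
  assert (Hc2 : m * y * (1 - y) = m * s) by (unfold s; ring).
  apply Rle_trans with (m * (3 * eps * u ^ 2 * (m * s) + (27 * Cc * u ^ 4 * ((m + 1) ^ 2)
      + (3 * eps * u ^ 2 * (1 + D ^ 2) + 27 * Cc * u ^ 4 * (1 + D ^ 4))))).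
  { apply Rmult_le_compat_l; auto. rewrite <- Hc2. eapply Rle_trans; [apply HE|].
    apply Rplus_le_compat_l. apply Rplus_le_compat_r. apply Rmult_le_compat_l; [|auto].
    apply Rmult_le_pos; [lra|]. apply pow_le; lra. }
  assert (HD2 : 0 <= D ^ 2) by apply pow2_ge_0.
  assert (HD4 : 0 <= D ^ 4) by (replace (D ^ 4) with ((D ^ 2) ^ 2) by ring; apply pow2_ge_0).
  assert (T1 : m * (3 * eps * u ^ 2 * (m * s)) <= 3 * eps).
  { replace (m * (3 * eps * u ^ 2 * (m * s))) with (3 * eps * ((m * u) ^ 2 * s)) by ring.
    assert ((m * u) ^ 2 <= 1) by (assert (0 <= m * u) by nra; nra).
    assert ((m * u) ^ 2 * s <= 1) by (assert (0 <= (m * u) ^ 2) by apply pow2_ge_0; nra).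
    nra. }
  assert (T2 : m * (27 * Cc * u ^ 4 * (m + 1) ^ 2) <= 27 * Cc * u).
  { replace (m * (27 * Cc * u ^ 4 * (m + 1) ^ 2)) with (27 * Cc * ((m * u) * u * (u * (m + 1)) ^ 2)) by ring.
    rewrite Hum. assert (0 <= m * u) by nra. assert ((m * u) * u * 1 ^ 2 <= u) by nra. nra. }
  assert (T3 : m * (3 * eps * u ^ 2 * (1 + D ^ 2)) <= 3 * eps * (1 + D ^ 2)).
  { replace (m * (3 * eps * u ^ 2 * (1 + D ^ 2))) with (3 * eps * (1 + D ^ 2) * ((m * u) * u)) by ring.
    assert (0 <= m * u) by nra. assert ((m * u) * u <= 1) by nra.
    assert (0 <= 3 * eps * (1 + D ^ 2)) by (repeat apply Rmult_le_pos; lra).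
    apply Rle_trans with (3 * eps * (1 + D ^ 2) * 1); [apply Rmult_le_compat_l; auto|lra]. }
  assert (T4 : m * (27 * Cc * u ^ 4 * (1 + D ^ 4)) <= 27 * Cc * u * (1 + D ^ 4)).
  { replace (m * (27 * Cc * u ^ 4 * (1 + D ^ 4))) with (27 * Cc * u * (1 + D ^ 4) * ((m * u) * u ^ 2)) by ring.
    assert (0 <= m * u) by nra. assert (u ^ 2 <= 1) by nra. assert ((m * u) * u ^ 2 <= 1) by nra.
    assert (0 <= 27 * Cc * u * (1 + D ^ 4)) by (repeat apply Rmult_le_pos; lra).
    apply Rle_trans with (27 * Cc * u * (1 + D ^ 4) * 1); [apply Rmult_le_compat_l; auto|lra]. }
  apply Rle_trans with (3 * eps + 27 * Cc * u + 3 * eps * (1 + D ^ 2) + 27 * Cc * u * (1 + D ^ 4));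
    [rewrite !Rmult_plus_distr_l; lra | right; ring].
Qed.

Lemma ballR x e y : ball x e y <-> Rabs (y - x) < e.
Proof. reflexivity. Qed.

Lemma deriv_eps g g' x : deriv01 g g' -> in01 x -> forall eps, 0 < eps ->
  exists d, 0 < d /\ forall z, in01 z -> z <> x -> Rabs (z - x) < d ->
    Rabs ((g z - g x) / (z - x) - g' x) < eps.
Proof.
  intros H Hx eps He.
  specialize (H x Hx). rewrite filterlim_locally in H.
  specialize (H (mkposreal eps He)).
  destruct H as [d Hd]. exists d; split; [apply cond_pos|].
  intros z Hz Hzx Hd'. apply (Hd z). apply Hd'. split; auto.
Qed.

Lemma cont_eps g g' x : deriv01 g g' -> in01 x -> forall eps, 0 < eps ->
  exists d, 0 < d /\ forall z, in01 z -> Rabs (z - x) < d -> Rabs (g z - g x) < eps.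
Proof.
  intros H Hx eps He.
  destruct (deriv_eps g g' x H Hx 1 Rlt_0_1) as [d [Hd Hz]].
  set (K := Rabs (g' x) + 1).
  assert (HK : 0 < K) by (unfold K; pose proof (Rabs_pos (g' x)); lra).
  exists (Rmin d (eps / K)); split.
  { apply Rmin_glb_lt; auto. apply Rdiv_lt_0_compat; auto. }
  intros z Hz1 Hz2.
  destruct (Req_dec z x) as [->|Hne].
  { rewrite Rminus_diag, Rabs_R0; auto. }
  assert (Hd1 : Rabs (z - x) < d) by (eapply Rlt_le_trans; [apply Hz2|apply Rmin_l]).
  assert (Hd2 : Rabs (z - x) < eps / K) by (eapply Rlt_le_trans; [apply Hz2|apply Rmin_r]).
  specialize (Hz z Hz1 Hne Hd1).
  assert (Hzx : z - x <> 0) by lra.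
  replace (g z - g x) with (((g z - g x) / (z - x) - g' x + g' x) * (z - x)) by (field; auto).
  rewrite Rabs_mult.
  assert (Rabs ((g z - g x) / (z - x) - g' x + g' x) <= K).
  { unfold K. eapply Rle_trans; [apply Rabs_triang|]. lra. }
  apply Rle_lt_trans with (K * Rabs (z - x)).
  { apply Rmult_le_compat_r; auto. apply Rabs_pos. }
  apply Rmult_lt_reg_l with (/ K). { apply Rinv_0_lt_compat; auto. }
  replace (/ K * (K * Rabs (z - x))) with (Rabs (z - x)) by (field; lra).
  replace (/ K * eps) with (eps / K) by (unfold Rdiv; ring). auto.
Qed.

Definition clamp (t : R) : R := Rmax 0 (Rmin 1 t).

Lemma clamp_in01 t : in01 (clamp t).
Proof. unfold clamp, in01, Rmax, Rmin. repeat destruct Rle_dec; lra. Qed.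

Lemma clamp_id t : in01 t -> clamp t = t.
Proof. unfold clamp, in01, Rmax, Rmin. intros. repeat destruct Rle_dec; lra. Qed.

Lemma clamp_lip a b : Rabs (clamp a - clamp b) <= Rabs (a - b).
Proof.
  unfold clamp, Rmax, Rmin. repeat destruct Rle_dec;
  repeat (match goal with |- context [Rabs ?u] => destruct (Rcase_abs u) as [?|?];
      [rewrite (Rabs_left u) by lra | rewrite (Rabs_right u) by lra] end); lra.
Qed.

Lemma G_cont g g' : deriv01 g g' -> forall t, continuity_pt (fun s => g (clamp s)) t.
Proof.
  intros H t eps He.
  destruct (cont_eps g g' (clamp t) H (clamp_in01 t) eps He) as [d [Hd Hz]].
  exists d; split; auto.
  intros s [_ Hs]. simpl in *. unfold R_dist in *.
  apply Hz. apply clamp_in01.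
  eapply Rle_lt_trans; [apply clamp_lip|]. auto.
Qed.

Lemma G_continuous g g' : deriv01 g g' -> forall t, continuous (fun s => g (clamp s)) t.
Proof. intros H t. apply continuity_pt_filterlim. eapply G_cont; eauto. Qed.

Lemma G_derive g g' : deriv01 g g' -> forall z, 0 < z < 1 ->
  is_derive (fun s => g (clamp s)) z (g' z).
Proof.
  intros H z Hz. apply is_derive_Reals. intros eps He.
  assert (Hz' : in01 z) by (unfold in01; lra).
  destruct (deriv_eps g g' z H Hz' eps He) as [d [Hd Hw]].
  assert (Hpos : 0 < Rmin d (Rmin z (1 - z))).
  { repeat apply Rmin_glb_lt; lra. }
  exists (mkposreal _ Hpos). intros h Hh0 Hh. simpl in Hh.
  assert (H1 : Rabs h < d) by (eapply Rlt_le_trans; [apply Hh|apply Rmin_l]).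
  assert (H2 : Rabs h < Rmin z (1 - z)) by (eapply Rlt_le_trans; [apply Hh|apply Rmin_r]).
  assert (H3 : Rabs h < z) by (eapply Rlt_le_trans; [apply H2|apply Rmin_l]).
  assert (H4 : Rabs h < 1 - z) by (eapply Rlt_le_trans; [apply H2|apply Rmin_r]).
  assert (Hzh : in01 (z + h)).
  { unfold in01. destruct (Rcase_abs h); [rewrite Rabs_left in *|rewrite Rabs_right in *]; lra. }
  rewrite (clamp_id (z+h)) by auto. rewrite (clamp_id z) by auto.
  specialize (Hw (z + h) Hzh ltac:(lra)).
  replace (z + h - z) with h in Hw by ring. apply Hw; auto.
Qed.

Lemma taylor g g1 g2 x : deriv01 g g1 -> deriv01 g1 g2 -> in01 x ->
  forall eps, 0 < eps -> exists d, 0 < d /\ forall t, in01 t -> Rabs (t - x) < d ->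
   Rabs (g t - (g x + g1 x * (t - x) + g2 x / 2 * (t - x) ^ 2)) <= eps * (t - x) ^ 2.
Proof.
  intros H1 H2 Hx eps He.
  destruct (deriv_eps g1 g2 x H2 Hx eps He) as [d [Hd Hw]].
  exists d; split; auto. intros t Ht Htd.
  destruct (Req_dec t x) as [->|Hne].
  { replace (g x - (g x + g1 x * (x - x) + g2 x / 2 * (x - x) ^ 2)) with 0 by ring.
    rewrite Rabs_R0. nra. }
  set (RG := fun s => g (clamp s) - (g x + g1 x * (s - x) + g2 x / 2 * (s - x) ^ 2)).
  destruct (MVT_gen RG x t (fun s => g1 s - (g1 x + g2 x * (s - x)))) as [c [Hc Heq]].
  { intros s Hs. unfold RG.
    assert (HG : is_derive (fun s => g (clamp s)) s (g1 s)).
    { apply (G_derive g g1 H1). unfold in01 in *.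
      split; [apply Rle_lt_trans with (Rmin x t)|apply Rlt_le_trans with (Rmax x t)];
        try tauto; unfold Rmin, Rmax; destruct Rle_dec; lra. }
    assert (HP : is_derive (fun s => g x + g1 x * (s - x) + g2 x / 2 * (s - x) ^ 2) s (g1 x + g2 x * (s - x))).
    { auto_derive; auto. field. }
    exact (is_derive_minus _ _ _ _ _ HG HP). }
  { intros s Hs. unfold RG. apply continuity_pt_minus.
    - eapply G_cont; eauto.
    - apply continuity_pt_filterlim. apply (ex_derive_continuous (fun s => g x + g1 x * (s - x) + g2 x / 2 * (s - x) ^ 2)). auto_derive; auto. }
  assert (Hc01 : in01 c).
  { unfold in01 in *. revert Hc; unfold Rmin, Rmax; destruct Rle_dec; lra. }
  assert (Hcx : Rabs (c - x) <= Rabs (t - x)).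
  { revert Hc; unfold Rmin, Rmax; destruct Rle_dec; intros;
    repeat (match goal with |- context [Rabs ?u] => destruct (Rcase_abs u) as [?|?];
      [rewrite (Rabs_left u) by lra | rewrite (Rabs_right u) by lra] end); lra. }
  assert (Hdc : Rabs (g1 c - (g1 x + g2 x * (c - x))) <= eps * Rabs (c - x)).
  { destruct (Req_dec c x) as [->|Hcne].
    - replace (g1 x - (g1 x + g2 x * (x - x))) with 0 by ring. rewrite Rabs_R0.
      rewrite Rminus_diag, Rabs_R0. lra.
    - assert (Hl : Rabs (c - x) < d) by lra.
      specialize (Hw c Hc01 Hcne Hl).
      replace (g1 c - (g1 x + g2 x * (c - x))) with (((g1 c - g1 x) / (c - x) - g2 x) * (c - x))
        by (field; lra).
      rewrite Rabs_mult. apply Rmult_le_compat_r; [apply Rabs_pos|lra]. }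
  unfold RG in Heq. rewrite (clamp_id t Ht), (clamp_id x Hx) in Heq.
  replace (g t - (g x + g1 x * (t - x) + g2 x / 2 * (t - x) ^ 2))
    with ((g1 c - (g1 x + g2 x * (c - x))) * (t - x)) by (rewrite <- Heq; ring).
  rewrite Rabs_mult.
  replace ((t - x) ^ 2) with (Rabs (t - x) * Rabs (t - x))
    by (rewrite <- Rabs_mult, Rabs_right by nra; ring).
  pose proof (Rabs_pos (t - x)). pose proof (Rabs_pos (c - x)).
  apply Rle_trans with (eps * Rabs (c - x) * Rabs (t - x)).
  { apply Rmult_le_compat_r; auto. }
  rewrite Rmult_assoc. apply Rmult_le_compat_l; [lra|]. apply Rmult_le_compat_r; auto.
Qed.

Lemma ln_lower v : 0 <= v -> v - v ^ 2 / 2 <= ln (1 + v).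
Proof.
  intros Hv.
  set (psi := fun s => ln (1 + s) - s + s ^ 2 / 2).
  destruct (MVT_gen psi 0 v (fun s => s ^ 2 / (1 + s))) as [c [Hc Heq]].
  { intros s Hs. assert (0 <= s) by (revert Hs; unfold Rmin, Rmax; destruct Rle_dec; lra).
    unfold psi. auto_derive. lra. field. lra. }
  { intros s Hs. assert (0 <= s) by (revert Hs; unfold Rmin, Rmax; destruct Rle_dec; lra).
    apply continuity_pt_filterlim. apply (ex_derive_continuous psi). unfold psi. auto_derive. lra. }
  assert (0 <= c) by (revert Hc; unfold Rmin, Rmax; destruct Rle_dec; lra).
  unfold psi in Heq. rewrite Rplus_0_r, ln_1 in Heq.
  assert (0 <= c ^ 2 / (1 + c) * (v - 0)).
  { apply Rmult_le_pos; [|lra]. apply Rdiv_le_0_compat; nra. }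
  lra.
Qed.

Lemma ln_upper v : 0 <= v -> ln (1 + v) <= v - v ^ 2 / 2 + v ^ 3 / 3.
Proof.
  intros Hv.
  set (psi := fun s => ln (1 + s) - s + s ^ 2 / 2 - s ^ 3 / 3).
  destruct (MVT_gen psi 0 v (fun s => - s ^ 3 / (1 + s))) as [c [Hc Heq]].
  { intros s Hs. assert (0 <= s) by (revert Hs; unfold Rmin, Rmax; destruct Rle_dec; lra).
    unfold psi. auto_derive. lra. field. lra. }
  { intros s Hs. assert (0 <= s) by (revert Hs; unfold Rmin, Rmax; destruct Rle_dec; lra).
    apply continuity_pt_filterlim. apply (ex_derive_continuous psi). unfold psi. auto_derive. lra. }
  assert (0 <= c) by (revert Hc; unfold Rmin, Rmax; destruct Rle_dec; lra).
  unfold psi in Heq. rewrite Rplus_0_r, ln_1 in Heq.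
  assert (0 <= c ^ 3 / (1 + c) * (v - 0)).
  { apply Rmult_le_pos; [|lra]. apply Rdiv_le_0_compat; nra. }
  replace (- c ^ 3 / (1 + c) * (v - 0)) with (- (c ^ 3 / (1 + c) * (v - 0))) in Heq by (field; lra).
  lra.
Qed.

Lemma num_bound x t : 0 < t <= 1 -> 0 <= x <= 1 ->
  Rabs ((ln (1 + x * t) - x * ln (1 + t)) / t ^ 2 - x * (1 - x) / 2) <= t / 3.
Proof.
  intros Ht Hx.
  pose proof (ln_lower (x * t) ltac:(nra)). pose proof (ln_upper (x * t) ltac:(nra)).
  pose proof (ln_lower t ltac:(nra)). pose proof (ln_upper t ltac:(nra)).
  assert (Ht2 : 0 < t ^ 2) by nra.
  replace ((ln (1 + x * t) - x * ln (1 + t)) / t ^ 2 - x * (1 - x) / 2)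
    with ((ln (1 + x * t) - x * ln (1 + t) - x * (1 - x) / 2 * t ^ 2) / t ^ 2) by (field; lra).
  rewrite Rabs_div by lra. rewrite (Rabs_right (t ^ 2)) by lra.
  apply Rmult_le_reg_r with (t ^ 2); auto.
  unfold Rdiv. rewrite Rmult_assoc, Rinv_l, Rmult_1_r by lra.
  apply Rabs_le. split.
  - assert (x * (t - t ^ 2 / 2 + t ^ 3 / 3) >= x * ln (1 + t)) by nra.
    assert (x * t ^ 3 <= t ^ 3) by nra. nra.
  - assert (x * (t - t ^ 2 / 2) <= x * ln (1 + t)) by nra.
    assert (x ^ 3 * t ^ 3 <= t ^ 3) by (assert (x^3 <= 1) by (simpl; nra); nra). nra.
Qed.

Lemma den_bound t : 0 < t <= 1 -> 1 - t / 2 <= ln (1 + t) / t <= 1.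
Proof.
  intros Ht. pose proof (ln_lower t ltac:(nra)). pose proof (ln_upper t ltac:(nra)).
  split.
  - apply Rmult_le_reg_r with t; [lra|]. unfold Rdiv. rewrite Rmult_assoc, Rinv_l by lra. nra.
  - apply Rmult_le_reg_r with t; [lra|]. unfold Rdiv. rewrite Rmult_assoc, Rinv_l by lra. nra.
Qed.

Definition tt (mu : R) (n : nat) : R := / INR (n + 1) / (1 + mu).
Definition Qf (x t : R) : R := ((ln (1 + x * t) - x * ln (1 + t)) / t ^ 2) / (ln (1 + t) / t).

Lemma INR_n1_pos n : 1 <= INR (n + 1).
Proof. rewrite plus_INR. simpl. pose proof (pos_INR n). lra. Qed.

Lemma tt_bounds mu n : 0 < mu -> 0 < tt mu n <= 1.
Proof.
  intros Hmu. unfold tt. pose proof (INR_n1_pos n).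
  split.
  - apply Rdiv_lt_0_compat; [apply Rinv_0_lt_compat|]; lra.
  - apply Rmult_le_reg_r with (1 + mu); [lra|]. unfold Rdiv. rewrite Rmult_assoc, Rinv_l by lra.
    rewrite Rmult_1_r. apply Rmult_le_reg_l with (INR (n+1)); [lra|]. rewrite Rinv_r by lra. nra.
Qed.

Lemma ln1t_pos t : 0 < t <= 1 -> 0 < ln (1 + t).
Proof. intros. pose proof (ln_lower t ltac:(lra)). nra. Qed.

Lemma a_eq mu n x : 0 < mu -> a_n1 mu n x = x + tt mu n * Qf x (tt mu n).
Proof.
  intros Hmu. pose proof (tt_bounds mu n Hmu). pose proof (ln1t_pos _ H).
  pose proof (INR_n1_pos n).
  unfold a_n1, Qf.
  replace (x / (INR (n + 1) * (1 + mu))) with (x * tt mu n) by (unfold tt; field; lra).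
  replace (1 / (INR (n + 1) * (1 + mu))) with (tt mu n) by (unfold tt; field; lra).
  field. lra.
Qed.

Lemma a_in01 mu n x : 0 < mu -> in01 x -> in01 (a_n1 mu n x).
Proof.
  intros Hmu Hx. unfold in01 in *. pose proof (tt_bounds mu n Hmu) as Ht.
  pose proof (INR_n1_pos n).
  unfold a_n1.
  replace (x / (INR (n + 1) * (1 + mu))) with (x * tt mu n) by (unfold tt; field; lra).
  replace (1 / (INR (n + 1) * (1 + mu))) with (tt mu n) by (unfold tt; field; lra).
  set (t := tt mu n) in *.
  pose proof (ln1t_pos t Ht).
  assert (0 <= ln (1 + x * t)) by (rewrite <- ln_1; apply ln_le; nra).
  assert (ln (1 + x * t) <= ln (1 + t)) by (apply ln_le; nra).
  split.
  - apply Rdiv_le_0_compat; lra.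
  - apply Rmult_le_reg_r with (ln (1 + t)); auto. unfold Rdiv.
    rewrite Rmult_assoc, Rinv_l by lra. lra.
Qed.

Lemma lim_u : is_lim_seq (fun n => / INR (n + 1)) 0.
Proof.
  assert (H : is_lim_seq (fun n => INR (n + 1)) p_infty).
  { pose proof is_lim_seq_INR as HI. apply is_lim_seq_incr_1 in HI.
    eapply is_lim_seq_ext; [|apply HI]. intros n. rewrite Nat.add_1_r. reflexivity. }
  apply is_lim_seq_inv in H; [|discriminate]. exact H.
Qed.

Lemma lim_tt mu : 0 < mu -> is_lim_seq (tt mu) 0.
Proof.
  intros Hmu. unfold tt.
  replace 0 with (0 / (1 + mu)) by (field; lra).
  apply is_lim_seq_div'; [apply lim_u|apply is_lim_seq_const|lra].
Qed.

Lemma lim_Q mu x : 0 < mu -> in01 x -> is_lim_seq (fun n => Qf x (tt mu n)) (x * (1 - x) / 2).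
Proof.
  intros Hmu Hx. unfold Qf. unfold in01 in Hx.
  replace (x * (1 - x) / 2) with ((x * (1 - x) / 2) / 1) by field.
  apply is_lim_seq_div'; [| |lra].
  - apply is_lim_seq_le_le with (fun n => x * (1 - x) / 2 - tt mu n / 3) (fun n => x * (1 - x) / 2 + tt mu n / 3).
    + intros n. pose proof (num_bound x (tt mu n) (tt_bounds mu n Hmu) Hx) as Hb.
      apply Rabs_le_between' in Hb. lra.
    + replace (x * (1 - x) / 2) with (x * (1 - x) / 2 - 0 / 3) at 1 by field.
      apply is_lim_seq_minus'; [apply is_lim_seq_const|].
      apply is_lim_seq_div'; [apply lim_tt; auto|apply is_lim_seq_const|lra].
    + replace (x * (1 - x) / 2) with (x * (1 - x) / 2 + 0 / 3) at 1 by field.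
      apply is_lim_seq_plus'; [apply is_lim_seq_const|].
      apply is_lim_seq_div'; [apply lim_tt; auto|apply is_lim_seq_const|lra].
  - apply is_lim_seq_le_le with (fun n => 1 - tt mu n / 2) (fun n => 1).
    + intros n. apply den_bound, tt_bounds; auto.
    + replace 1 with (1 - 0 / 2) at 1 by field.
      apply is_lim_seq_minus'; [apply is_lim_seq_const|].
      apply is_lim_seq_div'; [apply lim_tt; auto|apply is_lim_seq_const|lra].
    + apply is_lim_seq_const.
Qed.

Lemma int_split (G : R -> R) (HG : forall s, continuous G s) gx g1x g2x x a u :
  0 < u ->
  / u * RInt G a (a + u) = gx + g1x * (a + u / 2 - x) + g2x / 2 * ((a - x) ^ 2 + (a - x) * u + u ^ 2 / 3)
   + / u * RInt (fun s => G s - (gx + g1x * (s - x) + g2x / 2 * (s - x) ^ 2)) a (a + u).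
Proof.
  intros Hu.
  set (P := fun s => gx + g1x * (s - x) + g2x / 2 * (s - x) ^ 2).
  assert (HPc : forall s, continuous P s).
  { intros s. apply (ex_derive_continuous P). unfold P. auto_derive. auto. }
  assert (HexG : ex_RInt G a (a + u)) by (apply (ex_RInt_continuous (V:=R_CompleteNormedModule)); intros; auto).
  assert (HexP : ex_RInt P a (a + u)) by (apply (ex_RInt_continuous (V:=R_CompleteNormedModule)); intros; auto).
  assert (HexR : ex_RInt (fun s => G s - P s) a (a + u)).
  { apply (ex_RInt_minus G P); auto. }
  assert (HI : RInt G a (a + u) = RInt P a (a + u) + RInt (fun s => G s - P s) a (a + u)).
  { rewrite <- (RInt_plus P (fun s => G s - P s)) by auto.
    apply RInt_ext. intros; unfold plus; simpl; ring. }
  assert (HP : RInt P a (a + u) = (fun s => gx * s + g1x * (s - x) ^ 2 / 2 + g2x * (s - x) ^ 3 / 6) (a + u)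
                                 - (fun s => gx * s + g1x * (s - x) ^ 2 / 2 + g2x * (s - x) ^ 3 / 6) a).
  { apply is_RInt_unique.
    apply (is_RInt_derive (fun s => gx * s + g1x * (s - x) ^ 2 / 2 + g2x * (s - x) ^ 3 / 6) P).
    - intros s _. unfold P. auto_derive; auto. field.
    - intros s _. auto. }
  rewrite HI, HP. unfold P. field. lra.
Qed.

Lemma sq3 a b c : (a + b + c) ^ 2 <= 3 * (a ^ 2 + b ^ 2 + c ^ 2).
Proof.
  assert (3 * (a ^ 2 + b ^ 2 + c ^ 2) - (a + b + c) ^ 2 = (a - b) ^ 2 + (b - c) ^ 2 + (a - c) ^ 2) by ring.
  pose proof (pow2_ge_0 (a - b)). pose proof (pow2_ge_0 (b - c)). pose proof (pow2_ge_0 (a - c)). lra.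
Qed.

Lemma qu3 a b c : (a + b + c) ^ 4 <= 27 * (a ^ 4 + b ^ 4 + c ^ 4).
Proof.
  pose proof (sq3 a b c).
  assert ((a + b + c) ^ 4 = ((a + b + c) ^ 2) ^ 2) by ring.
  assert (((a + b + c) ^ 2) ^ 2 <= (3 * (a ^ 2 + b ^ 2 + c ^ 2)) ^ 2).
  { apply pow_incr. split; [apply pow2_ge_0|auto]. }
  replace ((3 * (a ^ 2 + b ^ 2 + c ^ 2)) ^ 2) with (9 * (a ^ 2 + b ^ 2 + c ^ 2) ^ 2) in H1 by ring.
  assert ((a ^ 2 + b ^ 2 + c ^ 2) ^ 2 <= 3 * (a ^ 4 + b ^ 4 + c ^ 4)).
  { pose proof (sq3 (a^2) (b^2) (c^2)).
    replace ((a ^ 2) ^ 2) with (a ^ 4) in H2 by ring.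
    replace ((b ^ 2) ^ 2) with (b ^ 4) in H2 by ring.
    replace ((c ^ 2) ^ 2) with (c ^ 4) in H2 by ring. auto. }
  lra.
Qed.

Lemma rem_int (Rm : R -> R) (HRc : forall s, continuous Rm s) eps Cc x y m k u :
  0 < u -> 0 <= INR k * u -> INR k * u + u <= 1 -> u * (m + 1) = 1 -> 0 <= eps -> 0 <= Cc ->
  (forall t, in01 t -> Rabs (Rm t) <= eps * (t - x) ^ 2 + Cc * (t - x) ^ 4) ->
  Rabs (/ u * RInt Rm (INR k * u) (INR k * u + u)) <=
    3 * eps * u ^ 2 * (1 + (INR k - m * y) ^ 2 + (m * y - (m + 1) * x) ^ 2)
    + 27 * Cc * u ^ 4 * (1 + (INR k - m * y) ^ 4 + (m * y - (m + 1) * x) ^ 4).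
Proof.
  intros Hu Ha Hb Hum He HC HR.
  set (a := INR k * u) in *.
  set (D := m * y - (m + 1) * x).
  set (K := INR k - m * y).
  set (c := 3 * eps * u ^ 2 * (1 + K ^ 2 + D ^ 2) + 27 * Cc * u ^ 4 * (1 + K ^ 4 + D ^ 4)).
  assert (Hpt : forall t, a <= t <= a + u -> Rabs (Rm t) <= c).
  { intros t Ht.
    assert (Hd : t - x = (t - a) + u * K + u * D).
    { unfold K, D, a. replace x with (u * (m + 1) * x) at 1 by (rewrite Hum; ring). ring. }
    assert (H2 : (t - x) ^ 2 <= 3 * u ^ 2 * (1 + K ^ 2 + D ^ 2)).
    { rewrite Hd. eapply Rle_trans; [apply sq3|].
      assert ((t - a) ^ 2 <= u ^ 2) by nra. nra. }
    assert (H4 : (t - x) ^ 4 <= 27 * u ^ 4 * (1 + K ^ 4 + D ^ 4)).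
    { rewrite Hd. eapply Rle_trans; [apply qu3|].
      assert ((t - a) ^ 2 <= u ^ 2) by nra.
      assert ((t - a) ^ 4 <= u ^ 4).
      { replace ((t - a) ^ 4) with (((t - a) ^ 2) ^ 2) by ring.
        replace (u ^ 4) with ((u ^ 2) ^ 2) by ring. apply pow_incr. split; [nra|auto]. }
      replace ((u * K) ^ 4) with (u ^ 4 * K ^ 4) by ring.
      replace ((u * D) ^ 4) with (u ^ 4 * D ^ 4) by ring. lra. }
    eapply Rle_trans; [apply HR; unfold in01; lra|].
    unfold c. apply Rplus_le_compat.
    - replace (3 * eps * u ^ 2 * (1 + K ^ 2 + D ^ 2)) with (eps * (3 * u ^ 2 * (1 + K ^ 2 + D ^ 2))) by ring.
      apply Rmult_le_compat_l; auto.
    - replace (27 * Cc * u ^ 4 * (1 + K ^ 4 + D ^ 4)) with (Cc * (27 * u ^ 4 * (1 + K ^ 4 + D ^ 4))) by ring.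
      apply Rmult_le_compat_l; auto. }
  assert (Hex : ex_RInt Rm a (a + u)) by (apply (ex_RInt_continuous (V:=R_CompleteNormedModule)); intros; auto).
  pose proof (abs_RInt_le_const Rm a (a + u) c ltac:(lra) Hex Hpt) as Hb'.
  rewrite Rabs_mult, Rabs_right by (apply Rle_ge, Rlt_le, Rinv_0_lt_compat; auto).
  replace (a + u - a) with u in Hb' by ring.
  apply Rmult_le_reg_l with u; auto.
  rewrite <- Rmult_assoc, Rinv_r, Rmult_1_l by lra. auto.
Qed.

Lemma identity_T (m y x gx g1x g2x : R) : 0 <= m ->
  let u := / (m + 1) in
  let e := m * (y - x) in
  m * (gx + g1x * (u / 2 - x) + g2x / 2 * (x ^ 2 - x * u + u ^ 2 / 3)
       + (g1x * u + g2x / 2 * (u ^ 2 - 2 * x * u)) * (m * y)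
       + (g2x / 2 * u ^ 2) * (m * (m - 1) * y ^ 2 + m * y) - gx)
  = g1x * ((1 - u) * (e - x + 1 / 2)) + g2x / 2 * ((1 - u) * ((1 - u) * y * (1 - y) + u * ((e - x) ^ 2 + (e - x) + 1 / 3))).
Proof. intros Hm u e. unfold u, e. field. lra. Qed.

Lemma integrand_eq (G : R -> R) (HGc : forall s, continuous G s) g (HG : forall s, in01 s -> G s = g s)
  gx g1x g2x x n k : (k <= n)%nat ->
  let u := / (INR n + 1) in
  INR (n + 1) * RInt g (INR k / INR (n + 1)) (INR (k + 1) / INR (n + 1)) =
  1 * (/ u * RInt (fun s => G s - (gx + g1x * (s - x) + g2x / 2 * (s - x) ^ 2)) (INR k * u) (INR k * u + u))
  + ((gx + g1x * (u / 2 - x) + g2x / 2 * (x ^ 2 - x * u + u ^ 2 / 3))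
     + (g1x * u + g2x / 2 * (u ^ 2 - 2 * x * u)) * INR k
     + (g2x / 2 * u ^ 2) * INR k ^ 2 + 0 * INR k ^ 3 + 0 * INR k ^ 4).
Proof.
  intros Hk u.
  assert (Hm : 0 <= INR n) by apply pos_INR.
  assert (Hk' : INR k <= INR n) by (apply le_INR; auto).
  assert (Hu : 0 < u) by (apply Rinv_0_lt_compat; lra).
  rewrite !plus_INR. simpl (INR 1).
  replace (INR k / (INR n + 1)) with (INR k * u) by (unfold u; field; lra).
  replace ((INR k + 1) / (INR n + 1)) with (INR k * u + u) by (unfold u; field; lra).
  replace (INR n + 1) with (/ u) at 1 by (unfold u; field; lra).
  rewrite (RInt_ext g G).
  2:{ intros z Hz. rewrite HG; auto.
      assert (INR k * u + u <= 1).
      { replace (INR k * u + u) with ((INR k + 1) * u) by ring.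
        replace 1 with ((INR n + 1) * u) at 2 by (unfold u; field; lra).
        apply Rmult_le_compat_r; [lra|]. apply Rplus_le_compat_r; auto. }
      assert (0 <= INR k * u) by (apply Rmult_le_pos; [apply pos_INR|lra]).
      revert Hz; unfold Rmin, Rmax; destruct Rle_dec; unfold in01; lra. }
  rewrite (int_split G HGc gx g1x g2x x (INR k * u) u Hu). ring.
Qed.

Lemma abs_pow4 z : Rabs z ^ 4 = z ^ 4.
Proof.
  rewrite RPow_abs. apply Rabs_right. apply Rle_ge.
  replace (z ^ 4) with ((z ^ 2) ^ 2) by ring. apply pow2_ge_0.
Qed.

Ltac lim_tac :=
  repeat first
    [ assumption
    | apply is_lim_seq_const
    | apply is_lim_seq_mult'
    | apply is_lim_seq_minus'
    | apply is_lim_seq_plus' ].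

Theorem theorem4p1 (mu : R) (f : R -> R) (g1 g2 : R -> R) :
  0 < mu ->
  C2_01 f ->
  deriv01 (f_mu mu f) g1 ->   (* g1 = f_mu' on [0,1] *)
  deriv01 g1 g2 ->            (* g2 = f_mu'' on [0,1] *)
  forall x, in01 x ->
    is_lim_seq (fun n : nat => INR n * (LK mu n f x - f x))
      (ln_mu mu x *
        (g1 x * (1 / 2 + (x - x ^ 2) / (2 * (1 + mu)) - x)
         + g2 x * ((x - x ^ 2) / 2))).
Proof.
  intros Hmu _ Hg1 Hg2 x Hx.
  set (g := f_mu mu f) in *.
  set (G := fun s => g (clamp s)).
  assert (HGc : forall s, continuous G s) by (apply (G_continuous g g1); auto).
  assert (HGg : forall s, in01 s -> G s = g s) by (intros s Hs; unfold G; rewrite clamp_id; auto).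
  set (gx := g x). set (g1x := g1 x). set (g2x := g2 x).
  set (Rm := fun s => G s - (gx + g1x * (s - x) + g2x / 2 * (s - x) ^ 2)).
  assert (HRc : forall s, continuous Rm s).
  { intros s. apply (continuous_minus G (fun s => gx + g1x * (s - x) + g2x / 2 * (s - x) ^ 2)); auto.
    apply (ex_derive_continuous (fun s => gx + g1x * (s - x) + g2x / 2 * (s - x) ^ 2)). auto_derive. auto. }
  assert (Hln : 0 < ln_mu mu x).
  { unfold ln_mu. rewrite <- ln_1. apply ln_increasing; unfold in01 in Hx; lra. }
  assert (Hfx : f x = ln_mu mu x * gx) by (unfold gx, g, f_mu; field; lra).
  set (u := fun n : nat => / (INR n + 1)).
  set (y := fun n => a_n1 mu n x).
  set (phi := fun n k => / u n * RInt Rm (INR k * u n) (INR k * u n + u n)).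
  set (T := fun n => g1x * ((1 - u n) * (INR n * (y n - x) - x + 1 / 2)) + g2x / 2 * ((1 - u n) * ((1 - u n) * y n * (1 - y n) + u n * ((INR n * (y n - x) - x) ^ 2 + (INR n * (y n - x) - x) + 1 / 3)))).
  assert (Hid : forall n, INR n * (LK mu n f x - f x) = ln_mu mu x * (T n + INR n * E n (y n) (phi n))).
  { intros n. unfold LK. fold g. fold (y n).
    rewrite (sum_eq _ (fun k => p_nk n k (y n) * (1 * phi n k + ((gx + g1x * (u n / 2 - x) + g2x / 2 * (x ^ 2 - x * u n + u n ^ 2 / 3))
     + (g1x * u n + g2x / 2 * (u n ^ 2 - 2 * x * u n)) * INR k
     + (g2x / 2 * u n ^ 2) * INR k ^ 2 + 0 * INR k ^ 3 + 0 * INR k ^ 4)))).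
    2:{ intros k Hk. rewrite Rmult_assoc. f_equal. unfold phi, u, Rm.
        apply (integrand_eq G HGc g HGg gx g1x g2x x n k Hk). }
    fold (E n (y n) (fun k => 1 * phi n k + ((gx + g1x * (u n / 2 - x) + g2x / 2 * (x ^ 2 - x * u n + u n ^ 2 / 3))
     + (g1x * u n + g2x / 2 * (u n ^ 2 - 2 * x * u n)) * INR k
     + (g2x / 2 * u n ^ 2) * INR k ^ 2 + 0 * INR k ^ 3 + 0 * INR k ^ 4))).
    rewrite E_lin, E_poly.
    destruct (moments n (y n)) as (H0 & H1 & H2 & H3 & H4).
    rewrite H0, H1, H2, H3, H4, Hfx.
    pose proof (identity_T (INR n) (y n) x gx g1x g2x (pos_INR n)) as HT.
    cbv zeta in HT. unfold T. fold (u n) in HT. rewrite <- HT. ring. }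
  assert (Hu0 : is_lim_seq u 0).
  { eapply is_lim_seq_ext; [|apply lim_u]. intros n. unfold u. rewrite plus_INR. reflexivity. }
  set (lam := x * (1 - x) / 2).
  assert (HQ := lim_Q mu x Hmu Hx). fold lam in HQ.
  assert (Hye : forall n, y n = x + tt mu n * Qf x (tt mu n)) by (intros; apply a_eq; auto).
  assert (Hee : forall n, INR n * (y n - x) = (1 - u n) / (1 + mu) * Qf x (tt mu n)).
  { intros n. rewrite Hye. unfold tt, u. rewrite plus_INR. simpl (INR 1).
    pose proof (pos_INR n). field. lra. }
  assert (Htt := lim_tt mu Hmu).
  assert (Hy : is_lim_seq y (x + 0 * lam)).
  { eapply is_lim_seq_ext; [intros n; symmetry; apply Hye|]. lim_tac. }
  assert (He : is_lim_seq (fun n => INR n * (y n - x)) ((1 - 0) / (1 + mu) * lam)).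
  { eapply is_lim_seq_ext; [intros n; symmetry; apply Hee|].
    apply is_lim_seq_mult'; auto. apply is_lim_seq_div'; [|apply is_lim_seq_const|lra]. lim_tac. }
  set (e := fun n => INR n * (y n - x)) in *.
  assert (HT : is_lim_seq T (g1x * ((1 - 0) * ((1 - 0) / (1 + mu) * lam - x + 1 / 2)) + g2x / 2 * ((1 - 0) * ((1 - 0) * (x + 0 * lam) * (1 - (x + 0 * lam)) + 0 * ((((1 - 0) / (1 + mu) * lam) - x) ^ 2 + (((1 - 0) / (1 + mu) * lam) - x) + 1 / 3))))).
  { unfold T. fold (e). lim_tac. 
  }
  assert (HR : is_lim_seq (fun n => INR n * E n (y n) (phi n)) 0).
  { destruct (continuity_ab_maj (fun s => Rabs (G s)) 0 1 ltac:(lra)) as [Mx [HMx _]].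
    { intros c _. apply (continuity_pt_comp G Rabs). apply (G_cont g g1 Hg1). apply Rcontinuity_abs. }
    set (B := Rabs (G Mx) + Rabs gx + Rabs g1x + Rabs g2x).
    assert (HB : forall t, in01 t -> Rabs (Rm t) <= B).
    { intros t Ht. specialize (HMx t Ht). simpl in HMx.
      assert (Htx : Rabs (t - x) <= 1).
      { unfold in01 in *. apply Rabs_le. lra. }
      unfold Rm, B.
      replace (G t - (gx + g1x * (t - x) + g2x / 2 * (t - x) ^ 2))
        with (G t + (- gx) + (- (g1x * (t - x))) + (- (g2x / 2 * ((t - x) * (t - x))))) by ring.
      eapply Rle_trans; [apply Rabs_triang|].
      eapply Rle_trans; [apply Rplus_le_compat_r, Rabs_triang|].
      eapply Rle_trans; [apply Rplus_le_compat_r, Rplus_le_compat_r, Rabs_triang|].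
      rewrite !Rabs_Ropp, !Rabs_mult.
      rewrite Rabs_div, (Rabs_right 2) by lra.
      pose proof (Rabs_pos g1x). pose proof (Rabs_pos g2x). pose proof (Rabs_pos (t - x)).
      assert (Rabs g1x * Rabs (t - x) <= Rabs g1x) by nra.
      assert (Rabs (t - x) * Rabs (t - x) <= 1) by nra.
      assert (Rabs g2x / 2 * (Rabs (t - x) * Rabs (t - x)) <= Rabs g2x) by nra.
      lra. }
    assert (HB0 : 0 <= B) by (eapply Rle_trans; [apply Rabs_pos|apply (HB x Hx)]).
    apply is_lim_seq_spec. intros eps0.
    pose proof (cond_pos eps0) as Heps0.
    set (lam' := (1 - 0) / (1 + mu) * lam) in *.
    set (KD := Rabs lam' + 2).
    assert (HKD : 0 < KD) by (unfold KD; pose proof (Rabs_pos lam'); lra).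
    set (eps := eps0 / (6 * (2 + KD ^ 2))).
    assert (Heps : 0 < eps).
    { unfold eps. apply Rdiv_lt_0_compat; auto. pose proof (pow2_ge_0 KD). lra. }
    destruct (taylor g g1 g2 x Hg1 Hg2 Hx eps Heps) as [d [Hd Htay]].
    set (Cc := B / d ^ 4).
    assert (HCc : 0 <= Cc) by (unfold Cc; apply Rdiv_le_0_compat; [auto|apply pow_lt; auto]).
    assert (HRm : forall t, in01 t -> Rabs (Rm t) <= eps * (t - x) ^ 2 + Cc * (t - x) ^ 4).
    { intros t Ht.
      assert (H4 : 0 <= (t - x) ^ 4) by (replace ((t - x) ^ 4) with (((t - x) ^ 2) ^ 2) by ring; apply pow2_ge_0).
      assert (H2 : 0 <= (t - x) ^ 2) by apply pow2_ge_0.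
      destruct (Rlt_le_dec (Rabs (t - x)) d) as [Hlt|Hge].
      - assert (Rabs (Rm t) <= eps * (t - x) ^ 2).
        { unfold Rm. rewrite HGg by auto. apply Htay; auto. }
        assert (0 <= Cc * (t - x) ^ 4) by (apply Rmult_le_pos; auto). lra.
      - assert (Hd4 : d ^ 4 <= (t - x) ^ 4).
        { rewrite <- (abs_pow4 (t - x)).
          apply pow_incr; lra. }
        assert (B <= Cc * (t - x) ^ 4).
        { unfold Cc. apply Rmult_le_reg_r with (d ^ 4); [apply pow_lt; auto|].
          unfold Rdiv. replace (B * / d ^ 4 * (t - x) ^ 4 * d ^ 4) with (B * (t - x) ^ 4)
            by (field; lra).
          apply Rmult_le_compat_l; auto. }
        assert (0 <= eps * (t - x) ^ 2) by (apply Rmult_le_pos; lra).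
        specialize (HB t Ht). lra. }
    set (eta := eps0 / (54 * (Cc + 1) * (2 + KD ^ 4))).
    assert (Heta : 0 < eta).
    { unfold eta. apply Rdiv_lt_0_compat; auto.
      assert (0 <= KD ^ 4) by (apply pow_le; lra). nra. }
    apply is_lim_seq_spec in He. specialize (He (mkposreal 1 Rlt_0_1)).
    apply is_lim_seq_spec in Hu0. specialize (Hu0 (mkposreal eta Heta)).
    generalize (filter_and _ _ He Hu0). apply filter_imp. simpl. intros n [Hen Hun].
    set (m := INR n).
    assert (Hm : 0 <= m) by apply pos_INR.
    assert (Hun' : 0 < u n) by (unfold u; cbv beta; apply Rinv_0_lt_compat; pose proof (pos_INR n); lra).
    rewrite Rminus_0_r in Hun. rewrite Rabs_right in Hun by lra.
    assert (Hum : u n * (m + 1) = 1) by (unfold u, m; cbv beta; field; pose proof (pos_INR n); lra).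
    set (D := m * y n - (m + 1) * x).
    assert (HDK : Rabs D <= KD).
    { unfold D. replace (m * y n - (m + 1) * x) with ((e n - lam') + lam' - x) by (unfold e, m; ring).
      unfold KD. unfold in01 in Hx.
      eapply Rle_trans; [apply Rabs_triang|]. rewrite Rabs_Ropp, (Rabs_right x) by lra.
      eapply Rle_trans; [apply Rplus_le_compat_r, Rabs_triang|]. lra. }
    assert (HD2 : D ^ 2 <= KD ^ 2).
    { rewrite <- (pow2_abs D). apply pow_incr. split; [apply Rabs_pos|auto]. }
    assert (HD4 : D ^ 4 <= KD ^ 4).
    { rewrite <- (abs_pow4 D).
      apply pow_incr. split; [apply Rabs_pos|auto]. }
    assert (Hyn : 0 <= y n <= 1) by (apply a_in01; auto).
    assert (Hbound := rem_sum n (y n) (phi n) eps Cc D Hyn ltac:(lra) HCc).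
    cbv zeta in Hbound. fold m in Hbound. change (/ (m + 1)) with (u n) in Hbound.
    assert (Hb : Rabs (m * E n (y n) (phi n)) <= 3 * eps * (2 + D ^ 2) + 27 * Cc * u n * (2 + D ^ 4)).
    { apply Hbound. intros k Hk. unfold phi.
      assert (Hk' : INR k <= m) by (apply le_INR; auto).
      assert (Ha0 : 0 <= INR k * u n) by (apply Rmult_le_pos; [apply pos_INR|lra]).
      assert (Ha1 : INR k * u n + u n <= 1).
      { replace (INR k * u n + u n) with ((INR k + 1) * u n) by ring.
        apply Rle_trans with ((m + 1) * u n); [apply Rmult_le_compat_r; lra| right; rewrite Rmult_comm; exact Hum]. }
      exact (rem_int Rm HRc eps Cc x (y n) m k (u n) Hun' Ha0 Ha1 Hum (Rlt_le _ _ Heps) HCc HRm). }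
    rewrite Rminus_0_r.
    eapply Rle_lt_trans; [apply Hb|].
    assert (3 * eps * (2 + D ^ 2) <= eps0 / 2).
    { replace (eps0 / 2) with (3 * eps * (2 + KD ^ 2))
        by (unfold eps; field; pose proof (pow2_ge_0 KD); lra).
      apply Rmult_le_compat_l; lra. }
    assert (HK4 : 0 <= KD ^ 4) by (apply pow_le; lra).
    assert (HD4' : 0 <= D ^ 4) by (replace (D ^ 4) with ((D ^ 2) ^ 2) by ring; apply pow2_ge_0).
    assert (A1 : Cc * (2 + D ^ 4) <= (Cc + 1) * (2 + KD ^ 4)) by (apply Rmult_le_compat; lra).
    assert (A2 : 27 * Cc * u n * (2 + D ^ 4) = 27 * u n * (Cc * (2 + D ^ 4))) by ring.
    assert (A3 : 27 * u n * ((Cc + 1) * (2 + KD ^ 4)) < eps0 / 2).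
    { replace (eps0 / 2) with (27 * eta * ((Cc + 1) * (2 + KD ^ 4))) by (unfold eta; field; lra).
      apply Rmult_lt_compat_r; [apply Rmult_lt_0_compat; lra|lra]. }
    assert (A4 : 27 * u n * (Cc * (2 + D ^ 4)) <= 27 * u n * ((Cc + 1) * (2 + KD ^ 4)))
      by (apply Rmult_le_compat_l; lra).
    lra. }
  assert (HL := is_lim_seq_mult' _ _ _ _ (is_lim_seq_const (ln_mu mu x)) (is_lim_seq_plus' _ _ _ _ HT HR)).
  assert (Hlim_eq : forall (v : nat -> R) (l1 l2 : R), l1 = l2 -> is_lim_seq v l1 -> is_lim_seq v l2)
    by (intros; subst; auto).
  eapply is_lim_seq_ext; [intros n; symmetry; apply Hid|].
  eapply Hlim_eq; [|exact HL].
  unfold lam, g1x, g2x. field. lra.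
Qed.
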